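(* Let $P$ be a finite poset and let $I\in\mathcal{IC}(P)$ contain all maximal elements of $P$. Then $\mathrm{Row}(I)=P-I$.
   Context: All posets are finite. For a poset $P$, a subset $I\subseteq P$ is interval-closed if for all $x,y\in I$ and $z\in P$ with $x\le z\le y$ we have $z\in I$; $\mathcal{IC}(P)$ is the set of interval-closed subsets of $P$. For $x\in P$ the toggle $t_x:\mathcal{IC}(P)\to\mathcal{IC}(P)$ is defined by $t_x(I)=I\triangle\{x\}$ if $I\triangle\{x\}\in\mathcal{IC}(P)$ and $t_x(I)=I$ otherwise. Rowmotion is $\mathrm{Row}=t_{x_1}\circ t_{x_2}\circ\cdots\circ t_{x_N}:\mathcal{IC}(P)\to\mathcal{IC}(P)$, where $(x_1,\dots,x_N)$ is a linear extension of $P$ (so elements are toggled from the top of the poset down); this does not depend on the choice of linear extension. *)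

(* Defs.v *)
From mathcomp Require Import all_boot all_order.
Set Implicit Arguments.
Unset Strict Implicit.
Unset Printing Implicit Defensive.
Import Order.Theory.
Local Open Scope order_scope.

Section IC.
Context {d : Order.disp_t} {T : finPOrderType d}.

Definition interval_closed (I : {set T}) : Prop :=
  forall x y z : T, x \in I -> y \in I -> x <= z -> z <= y -> z \in I.

Definition interval_closedb (I : {set T}) : bool :=
  [forall x, forall y, forall z,
     [&& x \in I, y \in I, x <= z & z <= y] ==> (z \in I)].

Definition toggle (x : T) (I : {set T}) : {set T} :=
  let J := if x \in I then I :\ x else x |: I in
  if interval_closedb J then J else I.

Definition linear_extension (s : seq T) : Prop :=
  [/\ uniq s, (forall x : T, x \in s) &
      (forall x y : T, x < y -> (index x s < index y s)%N)].

(* Row = t_{x_1} o t_{x_2} o ... o t_{x_N}  (t_{x_N} applied first) *)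
Definition rowmotion (s : seq T) (I : {set T}) : {set T} :=
  foldr toggle I s.

Definition maximal (x : T) : Prop := forall y : T, ~ (x < y).

End IC.

(* Main.v *)
Require Import Defs.
From mathcomp Require Import all_boot all_order.
Import Order.Theory.
Local Open Scope order_scope.

Section Aux.
Context {d : Order.disp_t} {T : finPOrderType d}.

Lemma exists_max (b : T) : exists m : T, b <= m /\ maximal m.
Proof.
suff: forall (n : nat) (b : T), (#|[set z : T | (b <= z)%O]| <= n)%N -> exists m : T, b <= m /\ maximal m.
  by move=> H; apply: (H _ b (leqnn _)).
elim=> [|n IH] {}b Hn.
  by move: Hn; rewrite leqn0 => /eqP /card0_eq /(_ b); rewrite inE lexx.
case: (boolP [exists c, b < c]).
  move/existsP=> [c Hbc].
  have Hsub : [set z : T | c <= z] \proper [set z : T | b <= z].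
    apply/properP; split.
      by apply/subsetP=> z; rewrite !inE => Hcz; apply: le_trans (ltW Hbc) Hcz.
    exists b; first by rewrite inE.
    by rewrite inE; apply/negP => Hcb; have := lt_le_trans Hbc Hcb; rewrite ltxx.
  have Hc := proper_card Hsub.
  have [m [Hcm Hm]] := IH c (leq_trans Hc Hn).
  by exists m; split => //; apply: le_trans (ltW Hbc) Hcm.
move=> Hno; exists b; split=> // y Hy.
by move/negP: Hno; apply; apply/existsP; exists y.
Qed.

Lemma icb_of (J : {set T}) : interval_closed J -> interval_closedb J.
Proof.
move=> H; apply/forallP=> x; apply/forallP=> y; apply/forallP=> z.
by apply/implyP=> /and4P [Hx Hy Hxz Hzy]; apply: (H x y).
Qed.

Lemma toggle_ok (x : T) (J : {set T}) :
  interval_closed (if x \in J then J :\ x else x |: J) ->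
  toggle x J = (if x \in J then J :\ x else x |: J).
Proof. by move=> H; rewrite /toggle; cbv zeta; rewrite (icb_of _ H). Qed.

Definition F (I U : {set T}) : {set T} := (I :&: ~: U) :|: (U :&: ~: I).

Lemma F_ic (I U : {set T}) : interval_closed I ->
  (forall x : T, maximal x -> x \in I) ->
  (forall y z : T, y \in U -> y <= z -> z \in U) ->
  interval_closed (F I U).
Proof.
move=> HI Hmax HU a b z; rewrite !inE.
have key : forall u v : T, u \in I -> u <= v -> v \in I.
  move=> u v Hu Huv; have [m [Hvm Hm]] := exists_max v.
  by apply: (HI u m) => //; apply: Hmax.
case/orP=> /andP [Ha1 Ha2]; case/orP=> /andP [Hb1 Hb2] Haz Hzb.
- apply/orP; left; rewrite (HI a b z) //=.
  by apply/negP=> Hz; move/negP: Ha2 Hb2; rewrite (HU z b) //.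
- by move/negP: Hb2; case; apply: key (le_trans Haz Hzb).
- by move/negP: Ha2 Hb2; rewrite (HU a b) // (le_trans Haz Hzb).
- apply/orP; right; rewrite (HU a z) //=.
  by apply/negP=> Hz; move/negP: Hb2; apply; apply: key Hz Hzb.
Qed.

Lemma F_step (I U : {set T}) (x : T) : x \notin U ->
  F I (x |: U) = if x \in F I U then F I U :\ x else x |: F I U.
Proof.
move=> HxU; apply/setP=> y; rewrite /F.
have Hx : (x \in (I :&: ~: U) :|: (U :&: ~: I)) = (x \in I).
  by rewrite !inE (negbTE HxU) /=; case: (x \in I).
rewrite Hx; case: (boolP (x \in I)) => HxI; rewrite !inE;
  case: (eqVneq y x) => [->|Hyx] //=; rewrite ?HxI ?(negbTE HxU) ?orbT //=.
Qed.

End Aux.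

Theorem lemma2p9 (d : Order.disp_t) (T : finPOrderType d) (s : seq T)
    (I : {set T}) :
  linear_extension s ->
  interval_closed I ->
  (forall x : T, maximal x -> x \in I) ->
  rowmotion s I = ~: I.
Proof.
move=> [Hu Hall Hlt] HI Hmax.
have main : forall t p, s = p ++ t -> foldr toggle I t = F I [set y in t].
  elim=> [|x t IHt] p Hs.
    by rewrite /=; apply/setP=> y; rewrite /F !inE /=; case: (y \in I).
  have Hs' : s = rcons p x ++ t by rewrite cat_rcons.
  rewrite /= (IHt _ Hs').
  have Hup : forall t', forall q, s = q ++ t' ->
      forall y z : T, y \in [set y0 in t'] -> y <= z -> z \in [set y0 in t'].
    move=> t' q Hq y z; rewrite !inE => Hy Hyz.
    case: (eqVneq y z) => [<-//|Hne].
    have Hyz' : y < z by rewrite lt_neqAle Hne.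
    have := Hlt _ _ Hyz'; rewrite Hq !index_cat.
    have Hyq : y \notin q.
      apply/negP=> Hyq; move: Hu; rewrite Hq cat_uniq => /and3P [_ /hasP Hh _].
      by apply: Hh; exists y.
    rewrite (negbTE Hyq).
    have := Hall z; rewrite Hq mem_cat => /orP [Hzq|Hzt]; last by move=> _.
    rewrite Hzq => H; have := leq_trans H (index_size z q).
    by rewrite ltnNge leq_addr.
  have HxU : x \notin [set y in t].
    rewrite inE; move: Hu; rewrite Hs cat_uniq => /and3P [_ _ /= /andP []] //.
  have -> : [set y in x :: t] = x |: [set y in t].
    by apply/setP=> y; rewrite !inE.
  rewrite F_step //.
  apply: toggle_ok; rewrite -F_step //; apply: F_ic => // y z.
  rewrite -[x |: _](_ : [set y in x :: t] = _); last by apply/setP=> w; rewrite !inE.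
  by apply: (Hup _ p).
rewrite /rowmotion (main s [::]) //.
by apply/setP=> y; rewrite /F !inE Hall /=; case: (y \in I).
Qed.
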